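(* Fix $\mathbf{x} \in \Omega$, $\alpha \in [0,1)$ and $i \in \{1,\dots,n\}$, and let $C = \{x_{(i)}\}$. Then $$B_{R_i}^*(\mathbf{x}) = \min\{E[F] : F \in \mathcal{F}_{C^+}(\Omega(\mathbf{x},R_i),\alpha)\}.$$
   Context: Fix integers $m \ge 2$, $n \ge 1$ and reals $S_{\min} < S_{\max}$; $S = \{S_0,\dots,S_{m-1}\}$ with $S_k = S_{\min} + k\frac{S_{\max}-S_{\min}}{m-1}$. $\mathcal{F}$ is the set of probability distributions on $S$, identified with the probability simplex in $\mathbb{R}^m$ with the Euclidean topology; $E[F]$ is the mean. $\Omega$ is the set of samples of size $n$ from $S$, identified with their sorted versions $x_{(1)} \le \dots \le x_{(n)}$. $P_F[\Omega']$ is the probability that the sorted sample of $n$ i.i.d. draws from $F$ lies in $\Omega' \subseteq \Omega$; $\mathcal{G}(\Omega',\alpha) = \{F : P_F[\Omega'] > \alpha\}$ and $\mathcal{F}(\Omega',\alpha)$ is its closure. The $i$th quantile preorder $R_i$ on $\Omega$: $\mathbf{x} \lesssim_{R_i} \mathbf{y}$ iff $x_{(i)} \le y_{(i)}$; $\Omega(\mathbf{x},R_i) = \{\mathbf{y} : x_{(i)} \le y_{(i)}\}$; $B_{R_i}^*(\mathbf{x}) = \min\{E[F] : F \in \mathcal{F}(\Omega(\mathbf{x},R_i),\alpha)\}$. For $C \subseteq S$: $\mathcal{F}_C = \{F \in \mathcal{F} : P_F[X = s] = 0 \ \forall s \in S\setminus C\}$, $\mathcal{G}_C(\Omega',\alpha)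 = \mathcal{F}_C \cap \mathcal{G}(\Omega',\alpha)$, $\mathcal{F}_C(\Omega',\alpha)$ is the closure of $\mathcal{G}_C(\Omega',\alpha)$, and $C^+ = C \cup \{S_{\min}\} \cup \{S_{j+1} : S_j \in C,\ j \le m-2\}$. *)

(* Defs.v *)
From HB Require Import structures.
From mathcomp Require Import all_boot all_order all_algebra.
From mathcomp Require Import all_classical all_reals topology normedtype matrix_topology.
Set Implicit Arguments. Unset Strict Implicit. Unset Printing Implicit Defensive.
Import Order.TTheory GRing.Theory Num.Theory.
Local Open Scope ring_scope.
Import numFieldNormedType.Exports.
Local Open Scope classical_set_scope.

Section Defs.
Variables (R : realType) (m n : nat) (Smin Smax : R).

Definition Spt (k : 'I_m) : R :=
  Smin + k%:R * ((Smax - Smin) / (m.-1)%:R).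

(* probability distributions on S, as the simplex in R^m (row vectors) *)
Definition simplex : set 'rV[R]_m :=
  [set F | (forall k, 0 <= F 0 k) /\ \sum_(k < m) F 0 k = 1].

Definition mean (F : 'rV[R]_m) : R := \sum_(k < m) F 0 k * Spt k.

(* sorted version of a sample (given by indices of the drawn support points;
   the order on indices coincides with the order on the values S_k) *)
Definition sortS (t : seq 'I_m) : seq 'I_m :=
  sort (fun a b : 'I_m => (a <= b)%N) t.

(* P_F[Om] : probability that the sorted sample of n i.i.d. draws from F
   lies in Om (Om is a predicate on sorted samples) *)
Definition Prob (F : 'rV[R]_m) (Om : seq 'I_m -> bool) : R :=
  \sum_(t : n.-tuple 'I_m | Om (sortS t)) \prod_(j < n) F 0 (tnth t j).

Definition Gset (Om : seq 'I_m -> bool) (alpha : R) : set 'rV[R]_m :=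
  [set F | simplex F /\ alpha < Prob F Om].
Definition Fset (Om : seq 'I_m -> bool) (alpha : R) : set 'rV[R]_m :=
  closure (Gset Om alpha).

Definition FC (C : {set 'I_m}) : set 'rV[R]_m :=
  [set F | simplex F /\ forall k, k \notin C -> F 0 k = 0].
Definition GCset (C : {set 'I_m}) (Om : seq 'I_m -> bool) (alpha : R) :=
  FC C `&` Gset Om alpha.
Definition FCset (C : {set 'I_m}) (Om : seq 'I_m -> bool) (alpha : R) :=
  closure (GCset C Om alpha).

(* i-th order statement (i : 'I_n, 0-based) of a sorted sample *)
Definition ostat (y : seq 'I_m) (i : nat) : R :=
  match y with [::] => 0 | a :: _ => Spt (nth a y i) end.

Definition Omega_q (x : seq 'I_m) (i : nat) : seq 'I_m -> bool :=
  fun y => ostat x i <= ostat y i.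

End Defs.

Definition Cplus (m : nat) (C : {set 'I_m}) : {set 'I_m} :=
  [set k : 'I_m | (k \in C) || (val k == 0%N) ||
                  [exists j in C, val k == (val j).+1]].

Definition is_min_mean (R : realType) (m : nat) (Smin Smax : R)
  (A : set 'rV[R]_m) (v : R) : Prop :=
  (exists F, A F /\ mean Smin Smax F = v) /\
  (forall F, A F -> v <= mean Smin Smax F).

(* Main.v *)
Require Import Defs.
From HB Require Import structures.
From mathcomp Require Import all_boot all_order all_algebra.
From mathcomp Require Import all_classical all_reals topology normedtype matrix_topology.
From mathcomp Require Import ring lra.
Import numFieldNormedType.Exports.
Import Order.TTheory GRing.Theory Num.Theory.
Local Open Scope ring_scope.

Lemma sorted_nth_count (m : nat) (c : 'I_m) (y : seq 'I_m) (d : 'I_m) j :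
  sorted (fun a b : 'I_m => (a <= b)%N) y -> (j < size y)%N ->
  (c <= nth d y j)%N = (count (fun k : 'I_m => (k < c)%N) y <= j)%N.
Proof.
have tr : transitive (fun a b : 'I_m => (a <= b)%N).
  by move=> a b e; apply: leq_trans.
elim: y j => [|a y IH] j //= Hs Hj.
have Hy := path_sorted Hs.
have Hall := order_path_min tr Hs.
have c0 : (c <= a)%N -> count (fun k : 'I_m => (k < c)%N) y = 0%N.
  move=> Hca; apply/eqP; rewrite -leqn0 leqNgt -has_count; apply/hasPn => k Hk.
  by rewrite -leqNgt (leq_trans Hca) //; move/allP: Hall => /(_ k Hk).
case: j Hj => [|j] Hj /=.
- case: (ltnP a c) => Hac /=; first by [].
  by rewrite c0.
- case: (ltnP a c) => Hac /=; first by rewrite add1n ltnS IH.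
  rewrite add0n c0 //; apply: (leq_trans Hac).
  by move/allP: Hall; apply; apply: mem_nth.
Qed.

Lemma Spt_le (R : realType) (m : nat) (Smin Smax : R) (hm : (2 <= m)%N) (hS : Smin < Smax)
  (a b : 'I_m) : (Spt Smin Smax a <= Spt Smin Smax b) = (a <= b)%N.
Proof.
rewrite /Spt lerD2l ler_pM2r ?ler_nat //.
apply: divr_gt0; first by rewrite subr_gt0.
by rewrite ltr0n; case: m hm a b => [|[|m]].
Qed.

Lemma ostatE (R : realType) (m : nat) (Smin Smax : R) (y : seq 'I_m) i d :
  (i < size y)%N -> ostat Smin Smax y i = Spt Smin Smax (nth d y i).
Proof. by case: y => [|a s] //= Hi; rewrite (set_nth_default d). Qed.

Lemma Om_count (R : realType) (m n : nat) (Smin Smax : R) (hm : (2 <= m)%N) (hS : Smin < Smax)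
  (x t : n.-tuple 'I_m) (i : 'I_n) :
  Omega_q Smin Smax x i (sortS t) = (count (fun k : 'I_m => (k < tnth x i)%N) t <= i)%N.
Proof.
have d : 'I_m by apply: Ordinal (_ : 0 < m)%N; apply: leq_trans hm.
rewrite /Omega_q (@ostatE _ _ Smin Smax _ _ d) ?size_tuple // (@ostatE _ _ Smin Smax _ _ d); last first.
  by rewrite /sortS size_sort size_tuple.
rewrite -tnth_nth Spt_le // sorted_nth_count; last first.
- by rewrite /sortS size_sort size_tuple.
- by apply: sort_sorted => a b; apply: leq_total.
by rewrite /sortS (permP (permEl (perm_sort _ _))).
Qed.

Lemma ProbQ (R : realType) (m n : nat) (b : pred 'I_m) (P : nat -> bool) (F : 'rV[R]_m) :
  \sum_(t : n.-tuple 'I_m | P (count b t)) \prod_(j < n) F 0 (tnth t j) =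
  \sum_(g : {ffun 'I_n -> bool} | P (count g (enum 'I_n)))
     \prod_(j < n) (if g j then \sum_(k | b k) F 0 k else \sum_(k | ~~ b k) F 0 k).
Proof.
have cE (f : {ffun 'I_n -> 'I_m}) :
    count b [tuple f j | j < n] = count [ffun j => b (f j)] (enum 'I_n).
  by rewrite /= ?val_ord_tuple count_map; apply: eq_count => j; rewrite /= ffunE.
rewrite (reindex (fun f : {ffun 'I_n -> 'I_m} => [tuple f j | j < n]) (P := fun t : n.-tuple 'I_m => P (count b t))) /=; last first.
  exists (fun t => [ffun j => tnth t j]) => f _.
    by apply/ffunP => j; rewrite ffunE tnth_mktuple.
  by apply: eq_from_tnth => j; rewrite tnth_mktuple ffunE.
rewrite (partition_big (fun f : {ffun 'I_n -> 'I_m} => [ffun j => b (f j)])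
   (fun g => P (count g (enum 'I_n)))) /=; last by move=> f; rewrite cE.
apply: eq_bigr => g Pg.
transitivity (\prod_(j<n) \sum_(k | b k == g j) F 0 k); last first.
  by apply: eq_bigr => j _; case: (g j); apply: eq_bigl => k;
    [rewrite eqb_id | rewrite eqbF_neg].
rewrite bigA_distr_big_dep.
apply: eq_big => [f|f _]; last by apply: eq_bigr => j _; rewrite tnth_mktuple.
rewrite cE; apply/andP/familyP => [[_ /eqP <-] j | H].
  by rewrite ffunE unfold_in.
have Eg : [ffun j => b (f j)] = g.
  by apply/ffunP => j; rewrite ffunE; move: (H j); rewrite unfold_in => /eqP.
by rewrite Eg Pg eqxx.
Qed.

Lemma sum_delta (R : realType) (m : nat) (P : pred 'I_m) (a : 'I_m) (f : 'I_m -> R) :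
  \sum_(k | P k) (k == a)%:R * f k = if P a then f a else 0.
Proof.
case Pa: (P a).
  rewrite (bigD1 a) //= eqxx mul1r big1 ?addr0 // => k /andP [_ /negbTE ->].
  by rewrite mul0r.
by rewrite big1 // => k Pk; case: eqP => [E|]; [rewrite E Pa in Pk | rewrite mul0r].
Qed.

Lemma Q01 (R : realType) (n : nat) (i : nat) :
  \sum_(g : {ffun 'I_n -> bool} | (count g (enum 'I_n) <= i)%N)
     \prod_(j < n) (if g j then (0 : R) else 1) = 1.
Proof.
rewrite (bigD1 [ffun => false]) /=; last first.
  by rewrite (eq_count (a2 := pred0)) ?count_pred0 // => j; rewrite ffunE.
rewrite big1 ?mul1r; last by move=> j _; rewrite ffunE.
rewrite big1 ?addr0 // => g /andP [_ Hg].
have [j gj] : exists j, g j.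
  apply/existsP; apply: contraNT Hg; rewrite negb_exists => /forallP H.
  by apply/eqP/ffunP => j; rewrite ffunE; apply/negbTE/H.
by rewrite (bigD1 j) //= gj mul0r.
Qed.

Lemma mean_lb (R : realType) (m : nat) (Smin Smax : R) (hm : (2 <= m)%N) (hS : Smin < Smax)
  (c : 'I_m) (F : 'rV[R]_m) : simplex F ->
  \sum_(k : 'I_m | (k < c)%N) F 0 k * Smin + \sum_(k : 'I_m | ~~ (k < c)%N) F 0 k * Spt Smin Smax c
  <= mean Smin Smax F.
Proof.
move=> [F0 _]; rewrite /mean [X in _ <= X](bigID (fun k : 'I_m => (k < c)%N)) /=.
have k0 : 'I_m by apply: Ordinal (_ : 0 < m)%N; apply: leq_trans hm.
have S0 : Spt Smin Smax (Ordinal (leq_trans (isT : (0 < 2)%N) hm)) = Smin.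
  by rewrite /Spt mul0r addr0.
apply: lerD; apply: ler_sum => k Hk; apply: ler_wpM2l => //.
  by rewrite -{1}S0 Spt_le.
by rewrite Spt_le // leqNgt.
Qed.

Lemma sum_delta1 (R : realType) (m : nat) (a : 'I_m) (f : 'I_m -> R) :
  \sum_k (k == a)%:R * f k = f a.
Proof. exact: (@sum_delta _ _ predT a f). Qed.

Theorem theorem5 (R : realType) (m n : nat) (Smin Smax : R)
  (hm : (2 <= m)%N) (hn : (1 <= n)%N) (hS : Smin < Smax)
  (x : n.-tuple 'I_m) (hx : sorted (fun a b : 'I_m => (a <= b)%N) x)
  (alpha : R) (ha0 : 0 <= alpha) (ha1 : alpha < 1) (i : 'I_n) :
  let C := [set tnth x i] in
  let Om := Omega_q Smin Smax x i in
  exists v : R,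
    is_min_mean Smin Smax (Fset n Om alpha) v /\
    is_min_mean Smin Smax (FCset n (Cplus C) Om alpha) v.
Proof.
move=> C Om.
set c := tnth x i.
have m0 : (0 < m)%N by apply: leq_trans hm.
pose k0 : 'I_m := Ordinal m0.
have Sk0 : Spt Smin Smax k0 = Smin by rewrite /Spt mul0r addr0.
pose T (q : R) : 'rV[R]_m := \row_k ((k == k0)%:R * q + (k == c)%:R * (1 - q)).
pose b := fun k : 'I_m => (k < c)%N.
pose pw (F : 'rV[R]_m) := \sum_(k | b k) F 0 k.
have qwE : forall F, simplex F -> \sum_(k | ~~ b k) F 0 k = 1 - pw F.
  move=> F [_ H]; rewrite -H /pw [X in _ = X - _](bigID b) /=.
  by rewrite [X in _ = X - _]addrC addrK.
have PE : forall F, Prob n F Om = \sum_(g : {ffun 'I_n -> bool} | (count g (enum 'I_n) <= i)%N)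
     \prod_(j < n) (if g j then pw F else \sum_(k | ~~ b k) F 0 k).
  move=> F; rewrite /Prob -(ProbQ _ _ _ b (fun k => (k <= i)%N) F).
  by apply: eq_bigl => t; rewrite /Om Om_count.
have pwT : forall q, pw (T q) = if (0 < c)%N then q else 0.
  move=> q; rewrite /pw.
  transitivity (\sum_(k | b k) (k == k0)%:R * q).
    apply: eq_bigr => k bk; rewrite mxE.
    have -> : (k == c) = false.
      by apply/negbTE/eqP => E; move: bk; rewrite /b E ltnn.
    by rewrite mul0r addr0.
  exact: (@sum_delta _ _ b k0 (fun _ => q)).
have pw0 : forall F, (c == 0 :> nat) -> pw F = 0.
  by move=> F /eqP c0; rewrite /pw big_pred0 // => k; rewrite /b c0 ltn0.
have pwF : forall F, pw (T (pw F)) = pw F.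
  move=> F; rewrite pwT; case: ifP => // /negbT; rewrite lt0n negbK => /(pw0 F) ->.
  by [].
have simT : forall q, 0 <= q <= 1 -> simplex (T q).
  move=> q /andP [q0 q1]; split => [k|].
    by rewrite mxE; apply: addr_ge0; apply: mulr_ge0 => //; rewrite subr_ge0.
  under eq_bigr do rewrite mxE.
  rewrite big_split /= (@sum_delta1 _ _ k0 (fun _ => q)) (@sum_delta1 _ _ c (fun _ => 1 - q)).
  by rewrite addrC subrK.
have meanT : forall q, mean Smin Smax (T q) = q * Smin + (1 - q) * Spt Smin Smax c.
  move=> q; rewrite /mean; under eq_bigr do rewrite mxE mulrDl -!mulrA.
  by rewrite big_split /= (@sum_delta1 _ _ k0 (fun k => q * Spt Smin Smax k))
    (@sum_delta1 _ _ c (fun k => (1 - q) * Spt Smin Smax k)) Sk0.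
have FCT : forall q, 0 <= q <= 1 -> FC (Cplus C) (T q).
  move=> q hq; split; first exact: simT.
  move=> k kn; rewrite mxE.
  have -> : (k == k0) = false.
    by apply/negbTE; apply: contraNneq kn => ->; rewrite inE /= eqxx orbT.
  have -> : (k == c) = false.
    by apply/negbTE; apply: contraNneq kn => ->; rewrite inE /C inE eqxx.
  by rewrite !mul0r addr0.
pose Sset := [set q : R | (0 <= q <= 1) /\ alpha < Prob n (T q) Om]%classic.
have S0 : Sset 0.
  split; first by rewrite lexx ler01.
  rewrite PE pwT if_same qwE; last by apply: simT; rewrite lexx ler01.
  by rewrite pwT if_same subr0 (Q01 R n i).
have hsup : has_sup Sset.
  by split; [exists 0 | exists 1 => q [/andP [_ ?] _]].
pose ps := sup Sset.
have ps0 : 0 <= ps by apply: sup_upper_bound hsup _ S0.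
have ps1 : ps <= 1 by apply: ge_sup; [exists 0 | move=> q [/andP [_ ?] _]].
pose v := ps * Smin + (1 - ps) * Spt Smin Smax c.
have Scmin : Smin <= Spt Smin Smax c by have := @Spt_le _ _ _ _ hm hS k0 c; rewrite Sk0 => ->.
have ClaimA : forall F, Gset n Om alpha F -> v <= mean Smin Smax F.
  move=> F [sF PF].
  have pF0 : 0 <= pw F by apply: sumr_ge0 => k _; case: sF.
  have pF1 : pw F <= 1.
    have : 0 <= \sum_(k | ~~ b k) F 0 k by apply: sumr_ge0 => k _; case: sF.
    by rewrite qwE // subr_ge0.
  have Spw : Sset (pw F).
    split; first by rewrite pF0 pF1.
    rewrite PE; move: PF; rewrite PE pwF qwE // (qwE (T (pw F))) ?pwF //.
    by apply: simT; rewrite pF0 pF1.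
  have pps : pw F <= ps by apply: sup_upper_bound hsup _ Spw.
  have L : pw F * Smin + (1 - pw F) * Spt Smin Smax c <= mean Smin Smax F.
    by rewrite -(qwE F sF) /pw !mulr_suml; exact: (@mean_lb _ _ _ _ hm hS).
  rewrite /v; nra.
have ClaimB : forall F, Fset n Om alpha F -> v <= mean Smin Smax F.
  move=> F clF; rewrite leNgt; apply/negP => Hlt.
  pose M : R := \sum_(k : 'I_m) `|Spt Smin Smax k| + 1.
  have M0 : 0 < M by rewrite /M ltr_wpDl // sumr_ge0.
  pose e := (v - mean Smin Smax F) / M.
  have e0 : 0 < e by rewrite /e divr_gt0 // subr_gt0.
  have [G [GG bG]] := clF _ (nbhsx_ballx F e e0).
  have := ClaimA G GG.
  move: bG; rewrite /ball /= => -[_ bG].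
  have : mean Smin Smax G - mean Smin Smax F < v - mean Smin Smax F.
    rewrite /mean -sumrB.
    apply: (@le_lt_trans _ _ (\sum_k e * `|Spt Smin Smax k|)).
      apply: ler_sum => k _; rewrite -mulrBl.
      apply: (le_trans (ler_norm _)); rewrite normrM ler_wpM2r //.
      by rewrite distrC; apply: ltW; move: (bG 0 k); rewrite /ball /=.
    rewrite -mulr_sumr.
    have -> : v - mean Smin Smax F = e * M by rewrite /e divfK // gt_eqF.
    by rewrite ltr_pM2l // /M ltrDl.
  lra.
have ClaimC : FCset n (Cplus C) Om alpha (T ps).
  move=> B /nbhs_ballP [e /= e0 Hb].
  have [q Sq qlt] := sup_adherent e0 hsup.
  have qlt' : ps - e < q := qlt.
  have qps : q <= ps by apply: sup_upper_bound hsup _ Sq.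
  exists (T q); split.
    split; first exact: FCT Sq.1.
    split; [exact: simT Sq.1 | exact: Sq.2].
  apply: Hb; rewrite /ball /=; split => // i0 k; rewrite /ball /= !mxE.
  have -> : (k == k0)%:R * ps + (k == c)%:R * (1 - ps) -
     ((k == k0)%:R * q + (k == c)%:R * (1 - q)) =
     ((k == k0)%:R - (k == c)%:R) * (ps - q) :> R by ring.
  have pq : 0 <= ps - q by rewrite subr_ge0.
  rewrite normrM (ger0_norm pq).
  case: (k == k0); case: (k == c);
    rewrite /= ?subrr ?normr0 ?mul0r ?subr0 ?sub0r ?normrN ?normr1 ?mul1r //;
    lra.
have sub : (GCset n (Cplus C) Om alpha `<=` Gset n Om alpha)%classic by move=> F [].
exists v; split; split.
- by exists (T ps); split; [exact: (closureS sub) | exact: meanT].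
- exact: ClaimB.
- by exists (T ps); split; [exact: ClaimC | exact: meanT].
- by move=> F FF; apply: ClaimB; exact: (closureS sub).
Qed.
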